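(* Let $D$ be an instance all of whose tuples are endogenous ($D^n=D$), let $\mathcal{Q}$ be a monotone query, and let $\bar a\in\mathcal{Q}(D)$. A tuple $t$ is a most responsible actual cause for $\bar a$ if and only if there is $D'\subseteq D$ with $t\in(D\smallsetminus D')\subseteq D^n$ and $(D,D',\bar a)\in\mathcal{MSSEP}^{c}(\mathcal{Q})$.
   Context: A query $\mathcal{Q}$ is monotone if $D_1\subseteq D_2$ implies $\mathcal{Q}(D_1)\subseteq\mathcal{Q}(D_2)$; $D\models\mathcal{Q}(\bar a)$ means $\bar a\in\mathcal{Q}(D)$. A tuple $\tau\in D^n$ is an actual cause for $\bar a$ if there is $\Gamma\subseteq D^n$ (contingency set) with $D\smallsetminus\Gamma\models\mathcal{Q}(\bar a)$ and $D\smallsetminus(\Gamma\cup\{\tau\})\not\models\mathcal{Q}(\bar a)$. The responsibility of an actual cause $\tau$ is $1/(|\Gamma|+1)$ with $\Gamma$ a minimum-size contingency set for $\tau$; a most responsible actual cause is an actual cause of maximum responsibility. $\mathcal{MSSEP}^{c}(\mathcal{Q})$ is the set of triples $(D,D',\bar a)$ with $\bar a\in\mathcal{Q}(D)$, $D'\subseteq D$, $\bar a\notin\mathcal{Q}(D')$, and $D'$ of maximum cardinality among subsets of $D$ with this last property. *)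

(* Defs.v *)
From mathcomp Require Import all_boot all_order all_algebra.
Set Implicit Arguments. Unset Strict Implicit. Unset Printing Implicit Defensive.
Import Order.TTheory GRing.Theory Num.Theory.

(* Database instances: finite sets of tuples drawn from a finite universe T.
   A query Q with answers of type A: [Q D a] means D |= Q(a). *)
Section Causality.
Variables (T : finType) (A : Type).
Implicit Types (Q : {set T} -> A -> bool) (D Dn G : {set T}).

Definition monotone_query Q :=
  forall D1 D2 a, D1 \subset D2 -> Q D1 a -> Q D2 a.

Definition is_contingency Q Dn D a (t : T) G : bool :=
  [&& G \subset Dn, Q (D :\: G) a & ~~ Q (D :\: (t |: G)) a].

Definition actual_cause Q Dn D a (t : T) : bool :=
  (t \in Dn) && [exists G, is_contingency Q Dn D a t G].

(* size of a minimum-size contingency set (meaningful for actual causes) *)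
Definition min_contingency_size Q Dn D a (t : T) : nat :=
  \big[minn/#|T|.+1]_(G : {set T} | is_contingency Q Dn D a t G) #|G|.

Definition responsibility Q Dn D a (t : T) : rat :=
  ((min_contingency_size Q Dn D a t).+1%:R)^-1.

Definition most_responsible_cause Q Dn D a (t : T) : Prop :=
  actual_cause Q Dn D a t /\
  forall t', actual_cause Q Dn D a t' ->
    (responsibility Q Dn D a t' <= responsibility Q Dn D a t)%R.

Definition MSSEPc Q D D' a : Prop :=
  [/\ Q D a, D' \subset D, ~~ Q D' a &
      forall D'', D'' \subset D -> ~~ Q D'' a -> #|D''| <= #|D'|].
End Causality.

(* Main.v *)
Require Import Defs.
From mathcomp Require Import all_boot all_order all_algebra.
From mathcomp Require Import zify.
Import Order.TTheory GRing.Theory Num.Theory.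
Set Implicit Arguments. Unset Strict Implicit.

Lemma arith_aux (x m g d d' : nat) : x <= m -> d' + g + 1 = d -> m < d ->
       g <= d - m - 1 -> x <= d'.
Proof. lia. Qed.

Section Aux.
Variables (T : finType) (A : Type) (Q : {set T} -> A -> bool) (D : {set T}) (a : A).

Lemma cont_props t G : t \in D -> is_contingency Q D D a t G ->
  t \notin G /\ #|D :\: (t |: G)| + #|G| + 1 = #|D|.
Proof.
move=> tD /and3P[GD QG nQ].
have tG : t \notin G.
  apply/negP => tG; move: nQ; suff -> : D :\: (t |: G) = D :\: G by rewrite QG.
  by apply/setP => x; rewrite !inE; case: eqP => // ->; rewrite tG.
have sub : t |: G \subset D by rewrite subUset sub1set tD GD.
have := cardsD D (t |: G); rewrite (setIidPr sub) cardsU1 tG.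
have := subset_leq_card sub; rewrite cardsU1 tG /=.
split => //; lia.
Qed.

Lemma bigmin_seq (I : eqType) (r : seq I) (P : pred I) (F : I -> nat) x j :
  j \in r -> P j -> \big[minn/x]_(i <- r | P i) F i <= F j.
Proof.
elim: r => // i r IH; rewrite inE big_cons => /orP[/eqP<- -> | jr Pj].
  exact: geq_minl.
case: (P i); last exact: IH.
by apply: leq_trans (geq_minr _ _) (IH jr Pj).
Qed.

Lemma min_le t G : is_contingency Q D D a t G -> min_contingency_size Q D D a t <= #|G|.
Proof.
move=> H; rewrite /min_contingency_size; apply: bigmin_seq => //; exact: mem_index_enum.
Qed.

Lemma min_ge t k : k <= #|T|.+1 ->
  (forall G, is_contingency Q D D a t G -> k <= #|G|) -> k <= min_contingency_size Q D D a t.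
Proof.
move=> hk hG; rewrite /min_contingency_size.
elim/big_ind: _ => //; first by move=> x y hx hy; rewrite leq_min hx hy.
Qed.

Lemma resp_le t t' : (responsibility Q D D a t' <= responsibility Q D D a t)%R =
  (min_contingency_size Q D D a t <= min_contingency_size Q D D a t').
Proof.
rewrite /responsibility lef_pV2 ?posrE ?ltr0n // ler_nat ltnS //.
Qed.

Hypothesis QD : Q D a.

Lemma key (M : {set T}) (t : T) : M \subset D -> ~~ Q M a ->
  (forall X : {set T}, X \subset D -> ~~ Q X a -> #|X| <= #|M|) -> t \in D :\: M ->
  [/\ actual_cause Q D D a t,
      min_contingency_size Q D D a t = #|D| - #|M| - 1 &
      forall t', actual_cause Q D D a t' -> #|D| - #|M| - 1 <= min_contingency_size Q D D a t'].
Proof.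
move=> MD nQM maxM; rewrite inE => /andP[tM tD].
set G := D :\: (t |: M).
have eq1 : D :\: G = t |: M.
  apply/setP => x; rewrite !inE; case: eqP => [->|_]; first by rewrite tD.
  case xM: (x \in M) => /=; first by rewrite (subsetP MD).
  by case: (x \in D).
have eq2 : D :\: (t |: G) = M.
  apply/setP => x; rewrite !inE; case: eqP => [->|_] /=; first by rewrite (negPf tM).
  case xM: (x \in M) => /=; first by rewrite (subsetP MD).
  by case: (x \in D).
have QtM : Q (t |: M) a.
  apply/negPn/negP => nQ.
  have h : t |: M \subset D by rewrite subUset sub1set tD MD.
  by move: (maxM _ h nQ); rewrite cardsU1 tM /=; lia.
have cG : is_contingency Q D D a t G.
  by rewrite /is_contingency eq1 eq2 QtM nQM subsetDl.
have [_ cardG] := cont_props tD cG.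
rewrite eq2 in cardG.
have lower : forall t', actual_cause Q D D a t' -> #|D| - #|M| - 1 <= min_contingency_size Q D D a t'.
  move=> t' /andP[t'D /existsP[G' cG']].
  apply: min_ge.
    have := subset_leq_card (subsetT D); rewrite cardsT; lia.
  move=> G'' cG''.
  have [_ c2] := cont_props t'D cG''.
  have := maxM (D :\: (t' |: G'')) (subsetDl _ _).
  by case/and3P: cG'' => _ _ -> /(_ isT); lia.
have act : actual_cause Q D D a t by rewrite /actual_cause tD; apply/existsP; exists G.
split => //.
apply/eqP; rewrite eqn_leq lower // andbT.
by apply: leq_trans (min_le cG) _; lia.
Qed.

End Aux.

Theorem proposition11 (T : finType) (A : Type) (Q : {set T} -> A -> bool)
    (Dn D : {set T}) (a : A) :
  Dn = D ->
  monotone_query Q ->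
  Q D a ->
  forall t : T,
    most_responsible_cause Q Dn D a t <->
    exists D' : {set T},
      [/\ t \in D :\: D', D :\: D' \subset Dn & MSSEPc Q D D' a].
Proof.
move=> -> _ QD t; split.
- move=> [act most].
  have act' := act; case/andP: act' => tD /existsP[G0 cG0].
  case: (@arg_minnP _ G0 (is_contingency Q D D a t) (fun G : {set T} => #|G|) cG0) => G cG minG.
  have msz : min_contingency_size Q D D a t = #|G|.
    apply/eqP; rewrite eqn_leq min_le //= min_ge //.
    by have := subset_leq_card (subsetT G); rewrite cardsT; lia.
  have [tG cardG] := cont_props tD cG.
  case/and3P: (cG) => GD _ nQ.
  exists (D :\: (t |: G)); split.
  + by rewrite !inE tD !eqxx.
  + exact: subsetDl.
  + split => //; first exact: subsetDl.
    move=> X XD nQX.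
    have [M [MD nQM] maxM] : exists2 M : {set T}, M \subset D /\ ~~ Q M a &
        forall Y : {set T}, Y \subset D -> ~~ Q Y a -> #|Y| <= #|M|.
      have PX : (fun Y : {set T} => (Y \subset D) && ~~ Q Y a) X by rewrite /= XD nQX.
      case: (@arg_maxnP _ X (fun Y : {set T} => (Y \subset D) && ~~ Q Y a) (fun Y : {set T} => #|Y|) PX) => M /andP[MD nQM] hM.
      by exists M => // Y YD nQY; apply: hM; rewrite YD nQY.
    have XM := maxM _ XD nQX.
    have : D :\: M != set0.
      rewrite setD_eq0; apply/negP => DM.
      have MeqD : M = D by apply/eqP; rewrite eqEsubset MD DM.
      by move: nQM; rewrite MeqD QD.
    case/set0Pn => t' t'DM.
    have [act' msz' _] := key QD MD nQM maxM t'DM.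
    have := most t' act'; rewrite resp_le msz msz'.
    have mD : #|M| < #|D|.
      apply: proper_card; rewrite properE MD /=; apply/subsetPn; exists t';
      by move: t'DM; rewrite inE => /andP[].
    exact: arith_aux XM cardG mD.
- move=> [D' [tDD' _ [_ D'D nQD' maxD']]].
  have [act msz lower] := key QD D'D nQD' maxD' tDD'.
  split => // t' act'.
  by rewrite resp_le msz; apply: lower.
Qed.
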